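(* Let $n\ge 2$, let $M_1,\ldots,M_k\in\mathrm{H}(n,\mathbb{Q}(\mathrm{i}))$ be such that $M_1M_2\cdots M_k\in\Omega$, and let $\ell\ge1$ be an integer. Write $\psi(M_i)=(\boldsymbol{a}_i,\boldsymbol{b}_i,c_i)$ for $i=1,\ldots,k$. Then \[(M_1^\ell M_2^\ell\cdots M_k^\ell)_{1,n}=\ell\sum_{i=1}^k\Big(c_i-\tfrac12\boldsymbol{a}_i^T\boldsymbol{b}_i\Big)+\frac{\ell^2}{2}\sum_{1\le i<j\le k-1}[M_i,M_j].\]
   Context: $\mathbb{Q}(\mathrm{i})=\{a+b\mathrm{i}\mid a,b\in\mathbb{Q}\}$. $\mathrm{H}(n,\mathbb{Q}(\mathrm{i}))$ is the set of $n\times n$ matrices $M=\begin{pmatrix}1&\boldsymbol{m}_1^T&m_3\\ \boldsymbol{0}&\boldsymbol{I}_{n-2}&\boldsymbol{m}_2\\ 0&\boldsymbol{0}^T&1\end{pmatrix}$ with $\boldsymbol{m}_1,\boldsymbol{m}_2\in\mathbb{Q}(\mathrm{i})^{n-2}$, $m_3\in\mathbb{Q}(\mathrm{i})$, and $\psi(M)=(\boldsymbol{m}_1,\boldsymbol{m}_2,m_3)$. $\Omega$ is the set of such matrices with $\boldsymbol{m}_1=\boldsymbol{m}_2=\boldsymbol{0}$. $X_{1,n}$ is the top-right entry of $X$. For $M_i,M_j$ with $\psi(M_i)=(\boldsymbol{a}_i,\boldsymbol{b}_i,c_i)$, $\psi(M_j)=(\boldsymbol{a}_j,\boldsymbol{b}_j,c_j)$,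 the commutator is the scalar $[M_i,M_j]=\boldsymbol{a}_i^T\boldsymbol{b}_j-\boldsymbol{a}_j^T\boldsymbol{b}_i\in\mathbb{Q}(\mathrm{i})$ (transpose without conjugation). *)

(* Defs.v *)
From mathcomp Require Import all_boot all_order all_algebra all_field.
Set Implicit Arguments. Unset Strict Implicit. Unset Printing Implicit Defensive.
Import Order.TTheory GRing.Theory Num.Theory.
Local Open Scope ring_scope.

Definition Qi (z : algC) : Prop := exists a b : rat, z = ratr a + ratr b * 'i.

(* Matrices have size n = m.+2 (so n >= 2); indices are 'I_(m.+2) = {0..n-1}.
   The middle index j : 'I_m (0-based) corresponds to matrix index j+1. *)
Definition midx (m : nat) (j : 'I_m) : 'I_(m.+2) := lift ord0 (widen_ord (leqnSn m) j).

(* The matrix [[1, a^T, c], [0, I_{n-2}, b], [0, 0^T, 1]]. *)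
Definition mkH (m : nat) (a b : 'cV[algC]_m) (c : algC) : 'M[algC]_(m.+2) :=
  1%:M + \sum_(j < m) (a j ord0 *: delta_mx ord0 (midx j)
                       + b j ord0 *: delta_mx (midx j) ord_max)
       + c *: delta_mx ord0 ord_max.

Definition inH (m : nat) (M : 'M[algC]_(m.+2)) : Prop :=
  exists (a b : 'cV[algC]_m) (c : algC),
    (forall j, Qi (a j ord0)) /\ (forall j, Qi (b j ord0)) /\ Qi c /\ M = mkH a b c.

Definition psi_a (m : nat) (M : 'M[algC]_(m.+2)) : 'cV[algC]_m := \col_j M ord0 (midx j).
Definition psi_b (m : nat) (M : 'M[algC]_(m.+2)) : 'cV[algC]_m := \col_j M (midx j) ord_max.
Definition psi_c (m : nat) (M : 'M[algC]_(m.+2)) : algC := M ord0 ord_max.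
Definition psi (m : nat) (M : 'M[algC]_(m.+2)) := (psi_a M, psi_b M, psi_c M).

Definition inOmega (m : nat) (M : 'M[algC]_(m.+2)) : Prop :=
  inH M /\ psi_a M = 0 /\ psi_b M = 0.

Definition topright (m : nat) (X : 'M[algC]_(m.+2)) : algC := X ord0 ord_max.

(* a^T b as a scalar (transpose without conjugation) *)
Definition dotT (m : nat) (u v : 'cV[algC]_m) : algC := (u^T *m v) ord0 ord0.

Definition commH (m : nat) (M N : 'M[algC]_(m.+2)) : algC :=
  dotT (psi_a M) (psi_b N) - dotT (psi_a N) (psi_b M).

(* Main.v *)
Require Import Defs.
From mathcomp Require Import all_boot all_order all_algebra all_field.
From mathcomp Require Import ring zify.
Import Order.TTheory GRing.Theory Num.Theory.
Local Open Scope ring_scope.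

Lemma zmodAC (V : zmodType) (I A A' B B' C C' E : V) :
  I + (A' + B') + C' + (A + (0 + E) + B) + C = I + (A + A' + (B + B')) + (C + C' + E).
Proof.
rewrite add0r -!addrA; congr (_ + _).
rewrite (addrCA A A'); congr (_ + _).
rewrite (addrCA B' C') (addrCA B' A) (addrCA C' A); congr (_ + _).
rewrite (addrCA B' E) (addrCA C' E) (addrCA B' B) (addrCA C' B) (addrCA E B); congr (_ + _).
rewrite (addrCA C' B') (addrCA E B'); congr (_ + _).
by rewrite (addrC C' E) (addrC C' C) (addrCA E C C').
Qed.

Section H.
Variable m : nat.
Implicit Types a b : 'cV[algC]_m.

Lemma midx_neq0 (j : 'I_m) : (midx j == ord0) = false.
Proof. by []. Qed.
Lemma max_neq0 : (ord_max == ord0 :> 'I_m.+2) = false.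
Proof. by []. Qed.
Lemma max_neq_midx (j : 'I_m) : (ord_max == midx j) = false.
Proof. apply/negbTE; rewrite -val_eqE /= /bump /=; have := ltn_ord j; lia. Qed.
Lemma midx_neq_max (j : 'I_m) : (midx j == ord_max) = false.
Proof. by rewrite eq_sym max_neq_midx. Qed.
Lemma midx_eq (j j' : 'I_m) : (midx j == midx j') = (j == j').
Proof. by rewrite -!val_eqE /= /bump /=. Qed.

Definition Am a : 'M[algC]_(m.+2) := \sum_(j < m) a j ord0 *: delta_mx ord0 (midx j).
Definition Bm b : 'M[algC]_(m.+2) := \sum_(j < m) b j ord0 *: delta_mx (midx j) ord_max.
Definition Dm : 'M[algC]_(m.+2) := delta_mx ord0 ord_max.

Lemma mkHE a b c : mkH a b c = 1%:M + (Am a + Bm b) + c *: Dm.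
Proof. by rewrite /mkH big_split. Qed.

Lemma dotTE a b : dotT a b = \sum_t a t ord0 * b t ord0.
Proof. by rewrite /dotT mxE; apply: eq_bigr => t _; rewrite mxE. Qed.

Ltac zz := rewrite ?mulmx_suml ?mulmx_sumr; apply: big1 => j _;
  rewrite ?mulmx_suml ?mulmx_sumr; try (apply: big1 => j' _);
  rewrite -?scalemxAl -?scalemxAr mul_delta_mx_cond
   ?midx_neq0 ?max_neq0 ?max_neq_midx ?midx_neq_max /= ?mulr0n ?scaler0 //.

Lemma AA a b : Am a *m Am b = 0. Proof. rewrite /Am; zz. Qed.
Lemma AD a : Am a *m Dm = 0. Proof. rewrite /Am /Dm; zz. Qed.
Lemma BA a b : Bm b *m Am a = 0. Proof. rewrite /Am /Bm; zz. Qed.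
Lemma BB a b : Bm b *m Bm a = 0. Proof. rewrite /Bm; zz. Qed.
Lemma BD a : Bm a *m Dm = 0. Proof. rewrite /Bm /Dm; zz. Qed.
Lemma DA a : Dm *m Am a = 0. Proof. rewrite /Am /Dm; zz. Qed.
Lemma DB a : Dm *m Bm a = 0. Proof. rewrite /Bm /Dm; zz. Qed.
Lemma DD : Dm *m Dm = 0. Proof. by rewrite /Dm mul_delta_mx_cond max_neq0 mulr0n. Qed.
Lemma AB a b : Am a *m Bm b = dotT a b *: Dm.
Proof.
rewrite /Am /Bm dotTE scaler_suml mulmx_suml; apply: eq_bigr => j _.
rewrite mulmx_sumr (bigD1 j) //= big1 ?addr0.
  by rewrite -scalemxAl -scalemxAr mul_delta_mx_cond midx_eq eqxx scalerA mulr1n /Dm.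
move=> j' /negbTE h; by rewrite -scalemxAl -scalemxAr mul_delta_mx_cond midx_eq eq_sym h mulr0n !scaler0.
Qed.

Lemma AmD a b : Am (a + b) = Am a + Am b.
Proof. by rewrite /Am -big_split; apply: eq_bigr => j _; rewrite mxE scalerDl. Qed.
Lemma BmD a b : Bm (a + b) = Bm a + Bm b.
Proof. by rewrite /Bm -big_split; apply: eq_bigr => j _; rewrite mxE scalerDl. Qed.

Lemma mkH_mul a b c a' b' c' :
  mkH a b c *m mkH a' b' c' = mkH (a + a') (b + b') (c + c' + dotT a b').
Proof.
rewrite !mkHE !mulmxDl !mulmxDr !mul1mx !mulmx1 -!scalemxAl -!scalemxAr
  !AA !AD !BA !BB !BD !DA !DB !DD !AB AmD BmD !scaler0 !addr0 !scalerDl.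
exact: zmodAC.
Qed.

Lemma mkH_a a b c j : mkH a b c ord0 (midx j) = a j ord0.
Proof.
rewrite mkHE /Am /Bm /Dm !mxE !summxE.
under eq_bigr do rewrite !mxE.
under [X in _ + (_ + X) + _]eq_bigr do rewrite !mxE.
rewrite (bigD1 j) //= big1 ?addr0; last first.
  by move=> i /negbTE h; rewrite midx_eq eq_sym h mulr0.
by rewrite big1 ?addr0 ?add0r ?midx_eq ?eqxx ?midx_neq_max ?mulr0 ?mulr1 ?addr0 // => i _; rewrite mulr0.
Qed.

Lemma mkH_b a b c j : mkH a b c (midx j) ord_max = b j ord0.
Proof.
rewrite mkHE /Am /Bm /Dm !mxE !summxE.
under eq_bigr do rewrite !mxE.
under [X in _ + (_ + X) + _]eq_bigr do rewrite !mxE.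
rewrite [X in _ + (_ + X) + _](bigD1 j) //=.
rewrite big1 ?[X in _ + (_ + (_ + X)) + _]big1.
- by rewrite midx_neq_max !eqxx mulr0 mulr1 !addr0 !add0r.
- by move=> i /negbTE h; rewrite midx_eq eq_sym h mulr0.
- by move=> i _; rewrite mulr0.
Qed.

Lemma mkH_c a b c : mkH a b c ord0 ord_max = c.
Proof.
rewrite mkHE /Am /Bm /Dm !mxE !summxE.
under eq_bigr do rewrite !mxE.
under [X in _ + (_ + X) + _]eq_bigr do rewrite !mxE.
rewrite !big1 /=.
- by rewrite eqxx mulr1 !add0r.
- by move=> i _; rewrite mulr0.
- by move=> i _; rewrite max_neq_midx mulr0.
Qed.

Lemma psi_a_mkH a b c : psi_a (mkH a b c) = a.
Proof. by apply/matrixP => i j; rewrite mxE mkH_a (ord1 j). Qed.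
Lemma psi_b_mkH a b c : psi_b (mkH a b c) = b.
Proof. by apply/matrixP => i j; rewrite mxE mkH_b (ord1 j). Qed.
Lemma psi_c_mkH a b c : psi_c (mkH a b c) = c.
Proof. exact: mkH_c. Qed.

Lemma mkH0 : mkH (0 : 'cV[algC]_m) 0 0 = 1.
Proof.
rewrite mkHE /Am /Bm !big1 ?scale0r ?addr0 // => j _; by rewrite mxE scale0r.
Qed.

Lemma dotTMnl a b l : dotT (a *+ l) b = dotT a b *+ l.
Proof.
rewrite !dotTE -sumrMnl; apply: eq_bigr => i _; by rewrite mulmxnE mulrnAl.
Qed.
Lemma dotTMnr a b l : dotT a (b *+ l) = dotT a b *+ l.
Proof.
rewrite !dotTE -sumrMnl; apply: eq_bigr => i _; by rewrite mulmxnE mulrnAr.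
Qed.
Lemma dotT_suml (I : Type) (r : seq I) (P : pred I) (F : I -> 'cV[algC]_m) b :
  dotT (\sum_(i <- r | P i) F i) b = \sum_(i <- r | P i) dotT (F i) b.
Proof.
rewrite dotTE.
under eq_bigr do rewrite summxE mulr_suml.
rewrite exchange_big; apply: eq_bigr => i _; by rewrite dotTE.
Qed.

Lemma mkH_exp a b c l :
  mkH a b c ^+ l = mkH (a *+ l) (b *+ l) (c *+ l + dotT a b *+ 'C(l, 2)).
Proof.
elim: l => [|l IH]; first by rewrite expr0 !mulr0n addr0 mkH0.
rewrite exprSr -mulmxE IH mkH_mul dotTMnl binS bin1.
congr mkH; rewrite ?mulrSr // mulrnDr -!addrA; congr (_ + _).
by rewrite addrCA addrC.
Qed.

Lemma mkH_prod k (a b : nat -> 'cV[algC]_m) (c : nat -> algC) :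
  \prod_(i < k) mkH (a i) (b i) (c i) =
  mkH (\sum_(i < k) a i) (\sum_(i < k) b i)
      (\sum_(j < k) (c j + dotT (\sum_(i < j) a i) (b j))).
Proof.
elim: k => [|k IH]; first by rewrite !big_ord0 mkH0.
rewrite !big_ord_recr /= -mulmxE IH mkH_mul; congr mkH.
by rewrite addrA.
Qed.
Lemma dotT_sumr (I : Type) (r : seq I) (P : pred I) (F : I -> 'cV[algC]_m) a :
  dotT a (\sum_(i <- r | P i) F i) = \sum_(i <- r | P i) dotT a (F i).
Proof.
rewrite dotTE.
under eq_bigr do rewrite summxE mulr_sumr.
rewrite exchange_big; apply: eq_bigr => i _; by rewrite dotTE.
Qed.
Lemma dotT0l b : dotT 0 b = 0.
Proof. by rewrite dotTE big1 // => i _; rewrite mxE mul0r. Qed.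
Lemma dotT0r a : dotT a 0 = 0.
Proof. by rewrite dotTE big1 // => i _; rewrite mxE mulr0. Qed.
End H.

Lemma swap2 K (P : nat -> nat -> bool) (F : nat -> nat -> algC) :
  \sum_(i < K) \sum_(j < K | P i j) F i j = \sum_(j < K) \sum_(i < K | P i j) F i j.
Proof.
rewrite (exchange_big_dep xpredT) //=.
Qed.

Lemma rowsplit K (D : nat -> nat -> algC) (i : 'I_K) :
  \sum_(j < K) D i j = \sum_(j < K | (i < j)%N) D i j + \sum_(j < K | (j < i)%N) D i j + D i i.
Proof.
rewrite (bigID (fun j : 'I_K => (i < j)%N)) /= -addrA; congr (_ + _).
rewrite (bigID (fun j : 'I_K => (j < i)%N)) /=; congr (_ + _).
  by apply: eq_bigl => j; rewrite -leqNgt andb_idl //; lia.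
rewrite (big_pred1 i) // => j /=; rewrite -!leqNgt -val_eqE /=.
by apply/idP/idP; [move/andP => [? ?]; apply/eqP; lia | move/eqP => ->; rewrite !leqnn].
Qed.

Lemma comb K (D : nat -> nat -> algC)
  (Hc : forall j, \sum_(i < K.+1) D i j = 0) (Hr : forall i, \sum_(j < K.+1) D i j = 0) :
  \sum_(i < K.+1) \sum_(j < K.+1 | (i < j)%N && (j.+1 < K.+1)%N) (D i j - D j i)
  = \sum_(i < K.+1) D i i + 2 * \sum_(j < K.+1) \sum_(i < K.+1 | (i < j)%N) D i j.
Proof.
have L1 : \sum_(i < K.+1) \sum_(j < K.+1 | (i < j)%N && (j.+1 < K.+1)%N) (D i j - D j i)
   = \sum_(i < K) \sum_(j < K | (i < j)%N) (D i j - D j i).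
  rewrite big_ord_recr /= [X in _ + X]big1 ?addr0; last first.
    by move=> j /andP[h1 h2]; exfalso; rewrite ltnS in h2; lia.
  apply: eq_bigr => i _; rewrite big_mkcond big_ord_recr /= ltnn andbF addr0.
  rewrite [RHS]big_mkcond; apply: eq_bigr => j _ /=; by rewrite ltnS ltn_ord andbT.
have L2 : \sum_(j < K.+1) \sum_(i < K.+1 | (i < j)%N) D i j
   = \sum_(j < K) \sum_(i < K | (i < j)%N) D i j + \sum_(i < K) D i K.
  rewrite big_ord_recr /=; congr (_ + _).
    apply: eq_bigr => j _; rewrite big_mkcond big_ord_recr /= ltnNge (ltnW (ltn_ord j)) addr0.
    by rewrite [RHS]big_mkcond.
  by rewrite big_mkcond big_ord_recr /= ltnn addr0; apply: eq_bigr => i _; rewrite ltn_ord.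
have Ld : \sum_(i < K.+1) D i i = \sum_(i < K) D i i + D K K by rewrite big_ord_recr.
have Lc : \sum_(i < K) D i K = - D K K.
  by have := Hc K; rewrite big_ord_recr /= => /eqP; rewrite addr_eq0 => /eqP.
have Lr : forall i : 'I_K, \sum_(j < K) D i j = - D i K.
  by move=> i; have := Hr i; rewrite big_ord_recr /= => /eqP; rewrite addr_eq0 => /eqP.
have LKK : \sum_(i < K) \sum_(j < K) D i j = D K K.
  by rewrite (eq_bigr _ (fun i _ => Lr i)) sumrN Lc opprK.
rewrite (eq_bigr _ (fun (i : 'I_K) _ => rowsplit K D i)) in LKK.
rewrite !big_split /= in LKK.
rewrite L1 L2 Ld Lc.
under eq_bigr do rewrite sumrB.
rewrite sumrB.
rewrite (swap2 K (fun i j => (i < j)%N) (fun i j => D j i)) /=.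
rewrite -(swap2 K (fun i j => (i < j)%N) D) /=.
move: LKK.
set S := \sum_(i < K) \sum_(j < K | (i < j)%N) D i j.
set L := \sum_(i < K) \sum_(j < K | (j < i)%N) D i j.
by move=> h; rewrite -h; ring.
Qed.

Lemma bin2N l : (2 * 'C(l, 2) + l = l * l)%N.
Proof.
elim: l => [|l IH] //; rewrite binS bin1; nia.
Qed.

Theorem lemma3 (m k l : nat) (Ms : 'I_k -> 'M[algC]_(m.+2))
  (HMs : forall i, inH (Ms i))
  (Hprod : inOmega (\prod_(i < k) Ms i))
  (Hl : (1 <= l)%N) :
  topright (\prod_(i < k) (Ms i) ^+ l)
  = l%:R * (\sum_(i < k) (psi_c (Ms i) - 2^-1 * dotT (psi_a (Ms i)) (psi_b (Ms i))))
    + (l ^ 2)%:R / 2 * (\sum_(i < k) \sum_(j < k | (i < j)%N && (j.+1 < k)%N)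
                           commH (Ms i) (Ms j)).
Proof.
case: k Ms HMs Hprod => [|K] Ms HMs Hprod.
  by rewrite !big_ord0 /topright mxE !mulr0 addr0.
pose a n := psi_a (Ms (inord n)).
pose b n := psi_b (Ms (inord n)).
pose c n := psi_c (Ms (inord n)).
have HM : forall i : 'I_K.+1, Ms i = mkH (a i) (b i) (c i).
  move=> i; rewrite /a /b /c inord_val.
  case: (HMs i) => [a0 [b0 [c0 [_ [_ [_ ->]]]]]].
  by rewrite psi_a_mkH psi_b_mkH psi_c_mkH.
have HP : \prod_(i < K.+1) Ms i = mkH (\sum_(i < K.+1) a i) (\sum_(i < K.+1) b i)
      (\sum_(j < K.+1) (c j + dotT (\sum_(i < j) a i) (b j))).
  by rewrite (eq_bigr _ (fun i _ => HM i)) mkH_prod.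
case: Hprod => _ [Ha Hb].
rewrite HP psi_a_mkH in Ha; rewrite HP psi_b_mkH in Hb.
under eq_bigr do rewrite HM mkH_exp.
rewrite (mkH_prod m K.+1 (fun n => a n *+ l) (fun n => b n *+ l)
   (fun n => c n *+ l + dotT (a n) (b n) *+ 'C(l, 2))) /topright mkH_c.
under [in RHS]eq_bigr do rewrite HM psi_c_mkH psi_a_mkH psi_b_mkH.
have HC : forall i j : 'I_K.+1, commH (Ms i) (Ms j) = dotT (a i) (b j) - dotT (a j) (b i).
  by move=> i j; rewrite /commH !HM !psi_a_mkH !psi_b_mkH.
under [X in _ = _ + _ * X]eq_bigr => i _ do under eq_bigr => j _ do rewrite HC.
have := comb K (fun i j => dotT (a i) (b j)).
rewrite /= => ->; first last.
- by move=> i; rewrite -dotT_sumr Hb dotT0r.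
- by move=> j; rewrite -dotT_suml Ha dotT0l.
under eq_bigr => j _ do rewrite sumrMnl dotTMnl dotTMnr dotT_suml
   (big_ord_widen K.+1 (fun i => dotT (a i) (b j)) (ltnW (ltn_ord j))).
rewrite !big_split /= !sumrMnl sumrN -mulr_sumr.
set C := \sum_(i < K.+1) c i.
set Dg := \sum_(i < K.+1) dotT (a i) (b i).
set U := \sum_(j < K.+1) _.
have h := congr1 (fun x => x%:R : algC) (bin2N l).
rewrite /= natrD !natrM in h.
have e : 'C(l, 2)%:R = (l%:R * l%:R - l%:R) / 2 :> algC.
  by rewrite -h; field.
rewrite -(mulr_natr C) -(mulr_natr Dg) -(mulr_natr (U *+ l)) -(mulr_natr U) natrX e.
clearbody C Dg U; by field.
Qed.
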